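(* Let $G$ be a graph whose adjacency matrix has exactly two eigenvalues (counted with multiplicity) different from $\pm1$, namely $r>1$ and $s<-1$; all other eigenvalues are equal to $1$ or $-1$. (i) One connected component of $G$ has all vertex degrees at least $2$, and all other connected components are isomorphic to $K_2$. (ii) If $u$ and $v$ are distinct vertices of $G$ with degrees $d_u$ and $d_v$, and every neighbor of $u$ is also a neighbor of $v$, then $d_v-d_u\geq 3$.
   Context: Graphs are finite, simple and undirected; eigenvalues of a graph are those of its adjacency matrix. *)

(* Defs.v *)
From HB Require Import structures.
From mathcomp Require Import all_boot all_order all_algebra.
Set Implicit Arguments. Unset Strict Implicit. Unset Printing Implicit Defensive.
Import Order.TTheory GRing.Theory Num.Theory.
Local Open Scope ring_scope.

Definition simple_graph (n : nat) (e : rel 'I_n) : Prop :=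
  symmetric e /\ irreflexive e.

Definition adjmx (R : nzRingType) (n : nat) (e : rel 'I_n) : 'M[R]_n :=
  \matrix_(i, j) (e i j)%:R.

Definition deg (n : nat) (e : rel 'I_n) (v : 'I_n) : nat := #|[set w | e v w]|.

Definition component (n : nat) (e : rel 'I_n) (v : 'I_n) : {set 'I_n} :=
  [set w | connect e v w].

(* Main.v *)
Require Import Defs.
From HB Require Import structures.
From mathcomp Require Import all_boot all_order all_algebra.
From mathcomp Require Import complex zify.
Import Order.TTheory GRing.Theory Num.Theory.
Local Open Scope ring_scope.
Local Open Scope sesquilinear_scope.

Lemma char_poly_conj (R : comNzRingType) n (P Q B : 'M[R]_n) :
  Q *m P = 1%:M -> char_poly (Q *m B *m P) = char_poly B.
Proof.
move=> QP; rewrite /char_poly /char_poly_mx.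
have -> : 'X%:M - map_mx polyC (Q *m B *m P) =
   map_mx polyC Q *m ('X%:M - map_mx polyC B) *m map_mx polyC P.
  rewrite mulmxBr mulmxBl -!map_mxM; congr (_ - _).
  by rewrite mul_mx_scalar -scalemxAl -mul_scalar_mx -map_mxM QP map_mx1 mulmx1.
by rewrite !det_mulmx mulrAC -det_mulmx -map_mxM QP map_mx1 det1 mul1r.
Qed.


Lemma expand2 (C : numClosedFieldType) n (M : 'M[C]_n) (al be : C) (x y : 'rV[C]_n) :
  ((al *: x + be *: y) *m M *m (al *: x + be *: y)^t*) 0 0 =
  al * al^* * (x *m M *m x^t*) 0 0 + al * be^* * (x *m M *m y^t*) 0 0
  + (be * al^* * (y *m M *m x^t*) 0 0 + be * be^* * (y *m M *m y^t*) 0 0).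
Proof.
rewrite !linearD /= !linearZ /= map_mxD !map_mxZ.
rewrite !mulmxDl !mulmxDr -!scalemxAl -!scalemxAr !mxE.
rewrite !mulrA; congr (_ + _ + (_ + _)); congr (_ * _); exact: mulrC.
Qed.

Lemma Npos (C : numClosedFieldType) n (z : 'rV[C]_n) :
  z != 0 -> 0 < (z *m 1%:M *m z^t*) 0 0.
Proof.
move=> nz; rewrite mulmx1 mxE.
have ge : forall j, 0 <= z 0 j * (z^t*) j 0.
  by move=> j; rewrite !mxE -normCK exprn_ge0.
rewrite lt_def sumr_ge0 // andbT; apply: contra nz => /eqP.
move=> /psumr_eq0P h; apply/eqP/rowP => j; rewrite mxE.
have {}h := h (fun i _ => ge i).
have := h j isT; rewrite !mxE -normCK => /eqP.
by rewrite expf_eq0 /= normr_eq0 => /eqP.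
Qed.


Lemma two_le (C : numDomainType) (x y : C) : 0 < x -> 2 * x <= y -> y <= x -> False.
Proof.
move=> x0 h1 h2; have := le_trans h1 h2.
rewrite mulrDl mul1r gerDr => h; move: (lt_le_trans x0 h); by rewrite ltxx.
Qed.

Lemma num_contra (C : numDomainType) (p q x1 x2 y1 y2 : C) :
  0 <= p -> 0 < q -> 0 < x1 -> 0 < x2 -> 2 * x1 <= y1 -> 2 * x2 <= y2 ->
  p * y1 + q * y2 <= p * x1 + q * x2 -> False.
Proof.
move=> p0 q0 x10 x20 h1 h2 h.
apply: (@two_le _ (p * x1 + q * x2) (p * y1 + q * y2)) => //.
- by apply: ltr_wpDl; [apply: mulr_ge0 =>//; apply: ltW | apply: mulr_gt0].
- rewrite mulrDr mulrCA [2 * (q * _)]mulrCA; apply: lerD.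
    by apply: ler_wpM2l.
  by apply: ler_wpM2l => //; exact: ltW.
Qed.

Lemma scaleE (R : pzRingType) m n (c : R) (M : 'M[R]_(m, n)) i j :
  (c *: M) i j = c * M i j.
Proof. by rewrite mxE. Qed.

Section Core.
Variables (C : numClosedFieldType) (n : nat) (A : 'M[C]_n) (r s : C) (a b : nat).
Hypotheses (herm : A^t* = A) (hr : 1 < r) (hs : s < -1)
  (hchar : char_poly A = ('X - r%:P) * ('X - s%:P) * ('X - 1) ^+ a * ('X + 1) ^+ b).

Let P := spectralmx A.
Let D := spectral_diag A.

Lemma PtP : P^t* *m P = 1%:M.
Proof. by rewrite -invmx_unitary ?spectral_unitarymx // mulVmx ?spectral_unit. Qed.

Lemma PPt : P *m P^t* = 1%:M.
Proof. exact/unitarymxP/spectral_unitarymx. Qed.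

Lemma A_eq : A = P^t* *m diag_mx D *m P.
Proof.
have /orthomx_spectralP -> : A \is normalmx by rewrite qualifE herm.
by rewrite invmx_unitary ?spectral_unitarymx.
Qed.

Lemma charD : char_poly A = \prod_i ('X - (D 0 i)%:P).
Proof.
rewrite A_eq char_poly_conj ?PtP // char_poly_trig ?diag_mx_is_trig //.
by apply: eq_bigr => i _; rewrite mxE eqxx mulr1n.
Qed.


Lemma D_in i : [|| D 0 i == r, D 0 i == s, D 0 i == 1 | D 0 i == -1].
Proof.
have : root (char_poly A) (D 0 i).
  rewrite charD /root horner_prod (bigD1 i) //= hornerXsubC subrr mul0r //.
rewrite hchar /root !hornerE !mulf_eq0 !expf_eq0 !subr_eq0.
rewrite addr_eq0 /= => H.
case/orP: H => [/orP[/orP[H|H]|/andP[_ H]]|/andP[_ H]]; rewrite H ?orbT //.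
Qed.

Lemma r_gt0 : 0 < r. Proof. exact: lt_trans ltr01 hr. Qed.
Lemma s_lt0 : s < 0. Proof. by apply: lt_trans hs _; rewrite oppr_lt0 ltr01. Qed.
Lemma s_lt_r : s < r. Proof. exact: lt_trans s_lt0 r_gt0. Qed.

Lemma D_uniq i j : i != j -> D 0 i = r -> D 0 j = r -> False.
Proof.
move=> ij Di Dj.
have := charD; rewrite hchar (bigD1 i) //= (bigD1 j) 1?eq_sym //= Di Dj.
rewrite -!mulrA => /mulfI; rewrite polyXsubC_eq0 => /(_ isT).
move=> /(congr1 (fun p => p.[r])).
rewrite !hornerM !horner_exp !hornerD !hornerN !hornerX !hornerC subrr mul0r.
move=> /esym /eqP; apply/negP; rewrite eq_sym.
rewrite !mulf_neq0 // ?expf_neq0 // ?subr_eq0 ?(gt_eqF s_lt_r) ?(gt_eqF hr) //.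
by rewrite gt_eqF // addr_gt0 // r_gt0.
Qed.

Lemma D_sq i : 1 <= D 0 i ^+ 2.
Proof.
case/or4P: (D_in i) => /eqP ->.
- by apply: exprn_ege1; exact: ltW.
- by rewrite -sqrrN; apply: exprn_ege1; rewrite lerNr ltW.
- by rewrite expr1n.
- by rewrite sqrrN expr1n.
Qed.

Lemma D_le1 i : D 0 i != r -> D 0 i <= 1.
Proof.
case/or4P: (D_in i) => /eqP ->.
- by rewrite eqxx.
- by move=> _; apply: le_trans (ltW s_lt0) ler01.
- by move=> _.
- by move=> _; apply: le_trans (lerN10 _) ler01.
Qed.

Lemma trCmul (z : 'rV[C]_n) (M : 'M[C]_n) : (z *m M)^t* = M^t* *m z^t*.
Proof. by rewrite trmx_mul map_mxM. Qed.

Lemma QF (d z : 'rV[C]_n) :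
  (z *m (P^t* *m diag_mx d *m P) *m z^t*) 0 0 =
  \sum_i d 0 i * `|(z *m P^t*) 0 i| ^+ 2.
Proof.
have -> : z *m (P^t* *m diag_mx d *m P) *m z^t* =
   (z *m P^t*) *m diag_mx d *m (z *m P^t*)^t*.
  by rewrite trCmul trmxCK !mulmxA.
rewrite mul_mx_diag mxE; apply: eq_bigr => j _.
by rewrite !mxE normCK mulrAC mulrC.
Qed.

Lemma AA_eq : A *m A = P^t* *m diag_mx (\row_j (D 0 j * D 0 j)) *m P.
Proof.
rewrite [in LHS]A_eq.
rewrite -!mulmxA (mulmxA P) PPt mul1mx (mulmxA (diag_mx D)) mulmx_diag !mulmxA //.
Qed.

Lemma N_eq (z : 'rV[C]_n) :
  (z *m 1%:M *m z^t*) 0 0 = \sum_i 1 * `|(z *m P^t*) 0 i| ^+ 2.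
Proof.
have := QF (const_mx 1) z; rewrite diag_const_mx mul_mx_scalar scale1r PtP => ->.
by apply: eq_bigr => i _; rewrite mxE.
Qed.

Lemma F1C (z : 'rV[C]_n) :
  (z *m 1%:M *m z^t*) 0 0 <= (z *m (A *m A) *m z^t*) 0 0.
Proof.
rewrite N_eq AA_eq QF; apply: ler_sum => i _; rewrite [(\row_j _) 0 i]mxE -expr2.
by apply: ler_wpM2r; [exact: exprn_ge0 | exact: D_sq].
Qed.

Lemma KC (z : 'rV[C]_n) : (forall i, D 0 i = r -> (z *m P^t*) 0 i = 0) ->
  (z *m A *m z^t*) 0 0 <= (z *m 1%:M *m z^t*) 0 0.
Proof.
move=> hz; rewrite N_eq [in X in X <= _]A_eq QF; apply: ler_sum => i _.
have [Dr|Dr] := eqVneq (D 0 i) r.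
  by rewrite hz // normr0 expr0n /= !mulr0.
by apply: ler_wpM2r; [exact: exprn_ge0 | exact: D_le1].
Qed.

Lemma F2C (z1 z2 : 'rV[C]_n) :
  z1 != 0 -> z2 != 0 ->
  (z1 *m A *m z2^t*) 0 0 = 0 -> (z2 *m A *m z1^t*) 0 0 = 0 ->
  (z1 *m 1%:M *m z2^t*) 0 0 = 0 -> (z2 *m 1%:M *m z1^t*) 0 0 = 0 ->
  2 * (z1 *m 1%:M *m z1^t*) 0 0 <= (z1 *m A *m z1^t*) 0 0 ->
  2 * (z2 *m 1%:M *m z2^t*) 0 0 <= (z2 *m A *m z2^t*) 0 0 -> False.
Proof.
move=> nz1 nz2 a12 a21 n12 n21 h1 h2.
have N1 := @Npos _ _ z1 nz1; have N2 := @Npos _ _ z2 nz2.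
have [/existsP [i0 /andP [/eqP Di0 w1]] | none] :=
  boolP [exists i, (D 0 i == r) && ((z1 *m P^t*) 0 i != 0)]; last first.
  apply: (@two_le _ _ _ N1 h1); apply: KC => i Di; apply/eqP.
  apply: contraNT none => nzw; apply/existsP; exists i; by rewrite Di eqxx nzw.
set al := (z2 *m P^t*) 0 i0; set be := - (z1 *m P^t*) 0 i0.
have good : forall i, D 0 i = r -> ((al *: z1 + be *: z2) *m P^t*) 0 i = 0.
  move=> i Di; have -> : i = i0.
    by case: (eqVneq i i0) => // ne; case: (@D_uniq i i0 ne Di Di0).
  rewrite mulmxDl -!scalemxAl mxE !scaleE.
  by rewrite /al /be mulNr mulrC subrr.
have K := @KC _ good.
rewrite !expand2 a12 a21 n12 n21 !mulr0 !addr0 !add0r in K.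
apply: (@num_contra _ _ _ _ _ _ _ _ _ N1 N2 h1 h2 K).
- by rewrite -normCK exprn_ge0.
- by rewrite -normCK exprn_gt0 // normr_gt0 oppr_eq0.
Qed.

Lemma F3C : A *m A = 1%:M -> False.
Proof.
move=> AA.
have : eigenvalue A r.
  rewrite eigenvalue_root_char hchar /root !hornerM !hornerXsubC subrr.
  by rewrite !mul0r.
case/eigenvalueP => v vA nz.
have : v *m (A *m A) = (r * r) *: v by rewrite mulmxA vA -scalemxAl vA scalerA.
rewrite AA mulmx1 => /eqP; rewrite -subr_eq0 -{1}[v]scale1r -scalerBl.
rewrite scaler_eq0 (negPf nz) orbF subr_eq0 => /eqP h.
have : 1 < r * r by rewrite -[1]mulr1 ltr_pM // ?ler01 // ltW.
by rewrite -h ltxx.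
Qed.
End Core.

Section Graph.
Variables (C : numClosedFieldType) (n : nat) (e : rel 'I_n).
Hypothesis (sg : simple_graph e).
Local Notation A := (adjmx C e).

Definition rv (x : 'I_n -> int) : 'rV[C]_n := \row_i (x i)%:~R.

Lemma BG (x y : 'I_n -> int) (M : 'M[C]_n) :
  (rv x *m M *m (rv y)^t*) 0 0 = \sum_i \sum_j (x i)%:~R * M i j * (y j)%:~R.
Proof.
rewrite mxE exchange_big /=; apply: eq_bigr => j _.
rewrite !mxE mulr_suml; apply: eq_bigr => i _.
by rewrite !mxE rmorph_int.
Qed.

Definition Q1 (x y : 'I_n -> int) := \sum_i \sum_j x i * (e i j)%:R * y j.
Definition cn (i j : 'I_n) : nat := (\sum_k e i k * e k j)%N.
Definition Q2 (x y : 'I_n -> int) := \sum_i \sum_j x i * (cn i j)%:R * y j.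
Definition N0 (x y : 'I_n -> int) := \sum_i x i * y i.

Lemma B1 x y : (rv x *m A *m (rv y)^t*) 0 0 = (Q1 x y)%:~R.
Proof.
rewrite BG rmorph_sum; apply: eq_bigr => i _; rewrite rmorph_sum.
by apply: eq_bigr => j _; rewrite !mxE !rmorphM /= rmorph_nat.
Qed.

Lemma AAE i j : (A *m A) i j = (cn i j)%:R.
Proof.
rewrite mxE /cn natr_sum; apply: eq_bigr => k _; by rewrite !mxE natrM.
Qed.

Lemma B2 x y : (rv x *m (A *m A) *m (rv y)^t*) 0 0 = (Q2 x y)%:~R.
Proof.
rewrite BG rmorph_sum; apply: eq_bigr => i _; rewrite rmorph_sum.
by apply: eq_bigr => j _; rewrite AAE !rmorphM /= rmorph_nat.
Qed.

Lemma B0 x y : (rv x *m 1%:M *m (rv y)^t*) 0 0 = (N0 x y)%:~R.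
Proof.
rewrite mulmx1 mxE rmorph_sum; apply: eq_bigr => i _.
by rewrite !mxE rmorph_int rmorphM.
Qed.


Hypothesis HF1 : forall z : 'rV[C]_n,
  (z *m 1%:M *m z^t*) 0 0 <= (z *m (A *m A) *m z^t*) 0 0.

Lemma F1int x : N0 x x <= Q2 x x.
Proof. by have := HF1 (rv x); rewrite B0 B2 ler_int. Qed.

Definition dx (al be : int) (u v : 'I_n) i : int := al * (i == u)%:R + be * (i == v)%:R.

Lemma sum_d1 (g : 'I_n -> int) u : \sum_i (i == u)%:R * g i = g u.
Proof.
rewrite (bigD1 u) //= eqxx mul1r big1 ?addr0 // => i /negPf ->; by rewrite mul0r.
Qed.

Lemma sum_delta al be u v (g : 'I_n -> int) :
  \sum_i dx al be u v i * g i = al * g u + be * g v.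
Proof.
rewrite /dx; under eq_bigr do rewrite mulrDl -!mulrA.
by rewrite big_split -!mulr_sumr !sum_d1.
Qed.

Lemma F1d u v (al be : int) :
  al * (al + be * (u == v)%:R) + be * (al * (v == u)%:R + be) <=
  al * (al * (cn u u)%:R + be * (cn u v)%:R) + be * (al * (cn v u)%:R + be * (cn v v)%:R).
Proof.
have := F1int (dx al be u v).
rewrite /N0 sum_delta /Q2.
have E : forall i, \sum_j dx al be u v i * (cn i j)%:R * dx al be u v j =
   dx al be u v i * (al * (cn i u)%:R + be * (cn i v)%:R).
  move=> i; rewrite -(sum_delta al be u v (fun j => (cn i j)%:R)) mulr_sumr.
  by apply: eq_bigr => j _; rewrite [dx _ _ _ _ j * _]mulrC mulrA.
under eq_bigr do rewrite E.
rewrite sum_delta /dx !eqxx !mulr1.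
done.
Qed.

Lemma sum_e v : (\sum_k (e v k : nat))%N = deg e v.
Proof.
rewrite /deg -sum1_card [RHS]big_mkcond /=; apply: eq_bigr => k _.
by rewrite inE; case: (e v k).
Qed.

Lemma esym' i j : e i j = e j i.
Proof. by case: sg => h _; rewrite h. Qed.

Lemma cn_diag i : cn i i = deg e i.
Proof.
rewrite /cn -sum_e; apply: eq_bigr => k _; rewrite (esym' k i).
by case: (e i k).
Qed.

Lemma cn_sym i j : cn i j = cn j i.
Proof.
rewrite /cn; apply: eq_bigr => k _; by rewrite mulnC (esym' i k) (esym' k j).
Qed.

Lemma cn_sub u v : (forall w, e u w -> e v w) -> cn u v = deg e u.
Proof.
move=> h; rewrite /cn -sum_e; apply: eq_bigr => k _.
case E: (e u k); last by [].
by rewrite (esym' k v) (h _ E).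
Qed.

Lemma deg2 k i j : e k i -> e k j -> i != j -> (2 <= deg e k)%N.
Proof.
move=> ki kj ij; rewrite /deg; have := cards2 i j; rewrite ij => <-.
by apply: subset_leq_card; apply/subsetP => w; rewrite !inE => /orP[]/eqP->.
Qed.

Lemma deg_ge1 u : (1 <= deg e u)%N.
Proof.
have := F1d u u 1 0; rewrite cn_diag eqxx; lia.
Qed.

Lemma L2 u v : u != v -> (forall w, e u w -> e v w) ->
  (2 <= deg e u)%N /\ (deg e u + 3 <= deg e v)%N.
Proof.
move=> uv h.
have c1 := @cn_sub u v h; have c2 : cn v u = deg e u by rewrite cn_sym.
have [du dv] : (cn u u = deg e u) /\ (cn v v = deg e v) by rewrite !cn_diag.
have H1 := F1d u v 1 (-1); have H2 := F1d u v ((deg e v)%:R - 1) (- (deg e u)%:R).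
rewrite c1 c2 du dv (negPf uv) eq_sym (negPf uv) !natz in H1 H2.
have := deg_ge1 u.
move: (deg e u) (deg e v) H1 H2 => x y H1 H2 H3.
nia.
Qed.

Hypothesis HF3 : A *m A = 1%:M -> False.

Lemma ex_deg2 : exists x0, (2 <= deg e x0)%N.
Proof.
have [/existsP [x0 h] | none] := boolP [exists x, (2 <= deg e x)%N].
  by exists x0.
exfalso; apply: HF3; apply/matrixP => i j; rewrite AAE !mxE.
have d1 : forall k, deg e k = 1%N.
  move=> k; have := deg_ge1 k; have : ~~ (2 <= deg e k)%N.
    by apply: contra none => h; apply/existsP; exists k.
  lia.
case: (eqVneq i j) => [<-|ij]; first by rewrite cn_diag d1.
rewrite /cn big1 // => k _.
case ik: (e i k); case kj: (e k j) => //.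
have := deg2 k i j; rewrite (esym' k i) ik kj ij d1 => /(_ isT isT isT).
by [].
Qed.

Lemma csym : connect_sym e.
Proof. by apply: sym_connect_sym; case: sg. Qed.

Lemma comp_edge x y z : y \in component e x -> e y z -> z \in component e x.
Proof.
rewrite !inE => cxy eyz; apply: connect_trans cxy _; exact: connect1.
Qed.

Lemma deg1_nb y : deg e y = 1%N -> exists z, e y z /\ (forall w, e y w -> w = z).
Proof.
move=> /eqP/cards1P [z hz]; exists z; split.
  have : z \in [set w | e y w] by rewrite hz set11.
  by rewrite inE.
move=> w ew; have : w \in [set w | e y w] by rewrite inE.
by rewrite hz inE => /eqP.
Qed.

Lemma deg1_struct y : deg e y = 1%N ->
  exists z, [/\ e y z, (forall w, e y w -> w = z), (forall w, e z w -> w = y)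
     & deg e z = 1%N].
Proof.
move=> dy; have [z [yz hz]] := @deg1_nb y dy.
have zw : forall w, e z w -> w = y.
  move=> w zw; apply/eqP; apply/negPn/negP => wy.
  have [] := @L2 y w; first by rewrite eq_sym.
    by move=> t /hz ->; rewrite esym'.
  by rewrite dy.
exists z; split => //.
rewrite /deg (_ : [set w | e z w] = [set y]) ?cards1 //.
apply/setP => w; rewrite !inE; apply/idP/eqP; first exact: zw.
by move=> ->; rewrite esym'.
Qed.

Lemma deg1_comp y z : e y z -> (forall w, e y w -> w = z) -> (forall w, e z w -> w = y) ->
  component e y = [set y; z].
Proof.
move=> yz hy hz; apply/setP => w; rewrite !inE; apply/idP/idP.
  move=> cyw.
  have cl : closed e (mem [set y; z]).
    move=> u t eut; rewrite !inE.
    case: (eqVneq u y) => [uy|uy]; first by subst u; rewrite (hy _ eut) eqxx orbT.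
    case: (eqVneq u z) => [uz|uz]; first by subst u; rewrite (hz _ eut) eqxx.
    apply/esym/negbTE/negP; case/orP => /eqP tu; subst t.
      by move: uz; rewrite (hy u) ?eqxx // esym'.
    by move: uy; rewrite (hz u) ?eqxx // esym'.
  by have := closed_connect cl cyw; rewrite !inE eqxx /= => <-.
case/orP=> /eqP ->; first exact: connect0.
exact: connect1.
Qed.

Lemma comp_all2 x : (2 <= deg e x)%N -> forall y, y \in component e x -> (2 <= deg e y)%N.
Proof.
move=> dx y; rewrite inE => cxy.
have := deg_ge1 y; case: (ltnP 1 (deg e y)) => // dy _.
have dy1 : deg e y = 1%N by have := deg_ge1 y; lia.
have [z [yz hy hz dz]] := @deg1_struct y dy1.
have : x \in component e y by rewrite inE csym.
rewrite (@deg1_comp y z yz hy hz) !inE => /orP[]/eqP xe; move: dx; rewrite xe ?dy1 ?dz //.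
Qed.

Definition ind (S : {set 'I_n}) (i : 'I_n) : int := (i \in S)%:R.

Lemma Q1_cross x1 x2 :
  (forall i, i \in component e x1 -> i \in component e x2 -> False) ->
  Q1 (ind (component e x1)) (ind (component e x2)) = 0.
Proof.
move=> dis; rewrite /Q1 big1 // => i _; rewrite big1 // => j _.
case Hi: (i \in component e x1); last by rewrite /ind Hi !mul0r.
case Hij: (e i j); last by rewrite mulr0 mul0r.
have j1 := @comp_edge _ _ _ Hi Hij.
case Hj: (j \in component e x2); last by rewrite /ind Hj mulr0.
by case: (dis j).
Qed.

Lemma N0_cross x1 x2 :
  (forall i, i \in component e x1 -> i \in component e x2 -> False) ->
  N0 (ind (component e x1)) (ind (component e x2)) = 0.
Proof.
move=> dis; rewrite /N0 big1 // => i _.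
case Hi: (i \in component e x1); last by rewrite /ind Hi !mul0r.
case Hj: (i \in component e x2); last by rewrite /ind Hj mulr0.
by case: (dis i).
Qed.

Lemma Q1_diag x : (2 <= deg e x)%N ->
  2 * N0 (ind (component e x)) (ind (component e x)) <=
  Q1 (ind (component e x)) (ind (component e x)).
Proof.
move=> dx; rewrite /N0 /Q1 mulr_sumr; apply: ler_sum => i _.
case Hi: (i \in component e x); last first.
  by rewrite /ind Hi !mul0r mulr0 big1 // => j _; rewrite !mul0r.
have -> : \sum_j ind (component e x) i * (e i j)%:R * ind (component e x) j
    = (deg e i)%:R.
  rewrite -sum_e natr_sum; apply: eq_bigr => j _.
  rewrite /ind Hi mul1r; case Hij: (e i j); last by rewrite mul0r.
  by rewrite (@comp_edge _ _ _ Hi Hij) mulr1.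
rewrite /ind Hi mulr1 ler_nat; exact: (@comp_all2 x dx i Hi).
Qed.

Lemma rv_nz x : rv (ind (component e x)) != 0.
Proof.
apply/eqP => /rowP /(_ x); rewrite !mxE /ind inE connect0 => /eqP.
by rewrite oner_eq0.
Qed.

Hypothesis HF2 : forall z1 z2 : 'rV[C]_n,
  z1 != 0 -> z2 != 0 ->
  (z1 *m A *m z2^t*) 0 0 = 0 -> (z2 *m A *m z1^t*) 0 0 = 0 ->
  (z1 *m 1%:M *m z2^t*) 0 0 = 0 -> (z2 *m 1%:M *m z1^t*) 0 0 = 0 ->
  2 * (z1 *m 1%:M *m z1^t*) 0 0 <= (z1 *m A *m z1^t*) 0 0 ->
  2 * (z2 *m 1%:M *m z2^t*) 0 0 <= (z2 *m A *m z2^t*) 0 0 -> False.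

Lemma two_comp x1 x2 : (2 <= deg e x1)%N -> (2 <= deg e x2)%N ->
  x2 \notin component e x1 -> False.
Proof.
move=> d1 d2 nx.
have dis : forall i, i \in component e x1 -> i \in component e x2 -> False.
  move=> i; rewrite !inE => c1 c2; move: nx; rewrite inE.
  by rewrite (connect_trans c1) // csym.
have dis' : forall i, i \in component e x2 -> i \in component e x1 -> False.
  by move=> i h1 h2; exact: dis i h2 h1.
have tw : forall x, (2 <= deg e x)%N ->
  2 * (rv (ind (component e x)) *m 1%:M *m (rv (ind (component e x)))^t*) 0 0
  <= (rv (ind (component e x)) *m A *m (rv (ind (component e x)))^t*) 0 0.
  move=> x dx; rewrite B0 B1; have h := @Q1_diag x dx.
  by rewrite -(ler_int C) intrM in h.
apply: (@HF2 _ _ (rv_nz x1) (rv_nz x2)) => //.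
- by rewrite B1 Q1_cross.
- by rewrite B1 Q1_cross.
- by rewrite B0 N0_cross.
- by rewrite B0 N0_cross.
- exact: tw.
- exact: tw.
Qed.

Lemma graph_main :
  (exists x0 : 'I_n,
      (forall y, y \in component e x0 -> (2 <= deg e y)%N) /\
      (forall y, y \notin component e x0 ->
         exists z, e y z /\ component e y = [set y; z])) /\
  (forall u v : 'I_n, u != v -> (forall w, e u w -> e v w) ->
      (deg e u + 3 <= deg e v)%N).
Proof.
split; last by move=> u v uv h; case: (@L2 u v uv h).
have [x0 d0] := ex_deg2; exists x0; split; first exact: comp_all2.
move=> y ny; case: (ltnP 1 (deg e y)) => dy.
  by case: (@two_comp x0 y d0 dy ny).
have dy1 : deg e y = 1%N by have := deg_ge1 y; lia.
have [z [yz hy hz _]] := @deg1_struct y dy1.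
by exists z; split => //; exact: deg1_comp.
Qed.
End Graph.

Theorem lemma2p3 (R : rcfType) (n : nat) (e : rel 'I_n) :
  simple_graph e ->
  (exists (r s : R) (a b : nat),
      1 < r /\ s < -1 /\
      char_poly (adjmx R e) =
        ('X - r%:P) * ('X - s%:P) * ('X - 1) ^+ a * ('X + 1) ^+ b) ->
  (exists x0 : 'I_n,
      (forall y, y \in component e x0 -> (2 <= deg e y)%N) /\
      (forall y, y \notin component e x0 ->
         exists z, e y z /\ component e y = [set y; z])) /\
  (forall u v : 'I_n, u != v -> (forall w, e u w -> e v w) ->
      (deg e u + 3 <= deg e v)%N).
Proof.
move=> sg [r [s [a [b [hr [hs hc]]]]]].
pose f := real_complex R.
have Amap : map_mx f (adjmx R e) = adjmx R[i] e.
  by apply/matrixP => i j; rewrite !mxE /f rmorph_nat.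
have hc' : char_poly (adjmx R[i] e) =
  ('X - (f r)%:P) * ('X - (f s)%:P) * ('X - 1) ^+ a * ('X + 1) ^+ b.
  rewrite -Amap -map_char_poly hc.
  by rewrite !rmorphM !rmorphXn !rmorphB !rmorphD /= !map_polyX !map_polyC /= rmorph1.
have hr' : 1 < f r by rewrite -(rmorph1 f) /f ltcR.
have hs' : f s < -1 by rewrite -(rmorph1 f) -rmorphN /f ltcR.
have herm : (adjmx R[i] e)^t* = adjmx R[i] e.
  apply/matrixP => i j; rewrite !mxE conjC_nat.
  by case: sg => h _; rewrite h.
apply: graph_main => //.
- exact: F1C herm hr' hs' hc'.
- exact: F3C hr' hc'.
- exact: F2C herm hr' hs' hc'.
Qed.
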